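(* Let $Q=\langle b\rangle\ltimes_{(g,\gamma)}X$ and let $S$ be a nonempty subset of $Q$. Then $S$ is a normal subloop of $Q$ with $S\cap(1\times X)=S\cap(C\times 0)=\{(1,0)\}$ if and only if there exist $k\in\mathbb Z$ and $z\in X$ such that $S=\langle(b^k,z)\rangle=\{(b^{ki},iz):i\in\mathbb Z\}$, the orders satisfy $|b^k|=|z|$, and $(b^k,z)\in Z(Q)$.
   Context: Let $(X,+)$ be an abelian group and $(g,\gamma)$ a construction pair on it: $g$ a permutation of $X$, $\gamma:X\times X\to X$ symmetric, alternating, biadditive, with (C1) $g^{-1}(g(x)+g(y))=x+y+\gamma(x,y)+g^{-1}(\gamma(x,y))+g^{-2}(\gamma(x,y))$, (C2) $\gamma(\gamma(x,y),z)=0$, (C3) $g^{-1}(\gamma(x,y))=\gamma(g(x),y)$ for all $x,y,z$. Let $\mathrm{Rad}(\gamma)=\{x:\gamma(x,y)=0\ \forall y\}$ and $r(g,\gamma)$ the least positive $r$ with $\sum_{0\le k<r}g^k(x)\in\mathrm{Rad}(\gamma)$ for all $x$ ($\infty$ if none). $I(i,j)$ is $\emptyset$ if $i=j$, $\{i,\dots,j-1\}$ if $i<j$, $\{j,\dots,i-1\}$ if $j<i$. For a cyclic group $C=\langle b\rangle$ such that (if finite) $|g|$ and $r(g,\gamma)$ divide $|C|$, $C\ltimes_{(g,\gamma)}X$ is the Moufang loop on $C\times X$ with multiplication $(b^i,x)(b^j,y)=(b^{i+j},g^{-j}(x)+y+\sum_{k\in I(i+j,-j)}g^{-k}(\gamma(x,y)))$,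 neutral element $(1,0)$. $Z(Q)$ is the center: elements of the nucleus that commute with all elements. *)

(* Defs.v *)
From HB Require Import structures.
From mathcomp Require Import all_boot all_order all_algebra.
Set Implicit Arguments. Unset Strict Implicit. Unset Printing Implicit Defensive.
Import Order.TTheory GRing.Theory Num.Theory.
Local Open Scope ring_scope.

Section Defs.
Variable X : zmodType.

(* order of an element described by its annihilator predicate on positive
   naturals: o = 0 encodes infinite order. *)
Definition is_order (P : nat -> Prop) (o : nat) : Prop :=
  ((o = 0%N) /\ forall m : nat, (0 < m)%N -> ~ P m) \/
  ((0 < o)%N /\ P o /\ forall m : nat, (0 < m)%N -> (m < o)%N -> ~ P m).

Definition gz (g gi : X -> X) (m : int) : X -> X :=
  match m with
  | Posz k => iter k g
  | Negz k => iter k.+1 gi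
  end.

Definition construction_pair (g gi : X -> X) (gam : X -> X -> X) : Prop :=
  [/\ cancel g gi, cancel gi g,
      (forall x y, gam x y = gam y x),
      (forall x, gam x x = 0) &
      (forall x y z, gam (x + y) z = gam x z + gam y z)] /\
  [/\ (forall x y z, gam x (y + z) = gam x y + gam x z),
      (forall x y, gi (g x + g y) =
                   x + y + gam x y + gi (gam x y) + gi (gi (gam x y))),
      (forall x y z, gam (gam x y) z = 0)
    &
      (forall x y, gi (gam x y) = gam (g x) y)].

Definition inRad (gam : X -> X -> X) (x : X) : Prop := forall y, gam x y = 0.

(* C = <b> cyclic of order n (n = 0 : infinite cyclic); if finite, |g| and
   r(g,gamma) divide n. *)
Definition cyclic_ok (g : X -> X) (gam : X -> X -> X) (n : nat) : Prop :=
  (0 < n)%N ->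
  (exists o, is_order (fun m => forall x, iter m g x = x) o /\ (o %| n)%N) /\
  (exists o, is_order (fun m => forall x, inRad gam (\sum_(k < m) iter k g x)) o
             /\ (o %| n)%N).

Definition Isum (a c : int) (f : int -> X) : X :=
  \sum_(m < `|c - a|%N) f (Num.min a c + (m : nat)%:Z).

(* Elements of C x X are represented as pairs (i, x) : int * X, where b^i is
   represented by its canonical representative i %% n (i itself if n = 0). *)
Definition inQ (n : nat) (p : int * X) : Prop := p.1 = (p.1 %% n%:Z)%Z.

Definition mulQ (g gi : X -> X) (gam : X -> X -> X) (n : nat)
  (p q : int * X) : int * X :=
  (((p.1 + q.1) %% n%:Z)%Z,
   gz g gi (- q.1) p.2 + q.2 +
   Isum (p.1 + q.1) (- q.1) (fun k => gz g gi (- k) (gam p.2 q.2))).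

Section Loop.
Variables (g gi : X -> X) (gam : X -> X -> X) (n : nat).
Local Notation inQ := (inQ n).
Local Notation "a * b" := (mulQ g gi gam n a b).

Definition subloop (S : int * X -> Prop) : Prop :=
  [/\ (forall p, S p -> inQ p),
      (exists p, S p),
      (forall a b, S a -> S b -> S (a * b)),
      (forall a b z, S a -> S b -> inQ z -> a * z = b -> S z)
    & (forall a b z, S a -> S b -> inQ z -> z * a = b -> S z)].

Definition normal_subloop (S : int * X -> Prop) : Prop :=
  subloop S /\
  forall x y, inQ x -> inQ y ->
    [/\ (forall w, (exists s, S s /\ w = x * s) <-> (exists s, S s /\ w = s * x)),
        (forall w, (exists s, S s /\ w = (x * s) * y) <->
                   (exists s, S s /\ w = x * (s * y)))
      & (forall w, (exists s, S s /\ w = x * (y * s)) <->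
                   (exists s, S s /\ w = (x * y) * s))].

Definition gen_subloop (a : int * X) : int * X -> Prop :=
  fun p => forall T, subloop T -> T a -> T p.

Definition in_nucleus (a : int * X) : Prop :=
  inQ a /\ forall x y, inQ x -> inQ y ->
    [/\ (a * x) * y = a * (x * y), (x * a) * y = x * (a * y)
      & (x * y) * a = x * (y * a)].

Definition in_center (a : int * X) : Prop :=
  in_nucleus a /\ forall x, inQ x -> a * x = x * a.
End Loop.

Definition ordC (n : nat) (k : int) : nat -> Prop :=
  fun m => (n%:Z %| m%:Z * k)%Z.
Definition ordX (z : X) : nat -> Prop := fun m => z *+ m = 0.

End Defs.

(* Main.v *)
Require Import Defs.
From mathcomp Require Import all_boot all_order all_algebra.
From mathcomp Require Import zify.
From Stdlib Require Import Classical.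
Import Order.TTheory GRing.Theory Num.Theory.
Set Implicit Arguments. Unset Strict Implicit. Unset Printing Implicit Defensive.
Local Open Scope ring_scope.


Lemma order_dvd (P : nat -> Prop) o : is_order P o ->
  (forall a b, P a -> P b -> P (a %% b)%N) -> (forall a q, P a -> P (a * q)%N) ->
  forall a, (0 < a)%N -> (P a <-> (0 < o)%N /\ (o %| a)%N).
Proof.
case=> [[-> h]|[o0 [Po hm]]] cl1 cl2 a a0.
  by split; [move=> Pa; case: (h a a0)| case].
split; last by case=> _ /dvdnP [q ->]; rewrite mulnC; exact: cl2.
move=> Pa; split=> //; have := cl1 _ _ Pa Po.
case: (posnP (a %% o)%N) => [r0 _|rpos Pr]; first by rewrite /dvdn r0.
by case: (hm _ rpos (ltn_pmod a o0)).
Qed.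

Lemma min_ex (P : nat -> Prop) a : (0 < a)%N -> P a ->
  exists o, [/\ (0 < o)%N, P o & forall m, (0 < m)%N -> (m < o)%N -> ~ P m].
Proof.
have H : forall N a, (a <= N)%N -> (0 < a)%N -> P a ->
    exists o, [/\ (0 < o)%N, P o & forall m, (0 < m)%N -> (m < o)%N -> ~ P m].
  elim=> [|N IH] b hb b0 Pb; first by lia.
  case: (classic (exists m, [/\ (0 < m)%N, (m < b)%N & P m])).
    by case=> c [c0 cb Pc]; apply: (IH c) => //; lia.
  move=> hn; exists b; split=> // c c0 cb Pc; apply: hn; by exists c.
by move=> a0 Pa; apply: (H a a).
Qed.

Lemma common_order (P P' : nat -> Prop) : (forall a, (0 < a)%N -> (P a <-> P' a)) ->
  exists o, is_order P o /\ is_order P' o.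
Proof.
move=> hPP.
case: (classic (exists a, (0 < a)%N /\ P a)).
  case=> a [a0 Pa]; have [o [o0 Po hm]] := min_ex a0 Pa.
  exists o; split; right.
    by split=> //; split=> //; exact: hm.
  split=> //; split; first by rewrite -hPP.
  by move=> c c0 co; rewrite -hPP //; apply: hm.
move=> hn; exists 0%N; split; left; split=> // c c0 Pc; apply: hn; exists c.
  by [].
by split; rewrite // hPP.
Qed.

Lemma ordC_mod n k a b : ordC n k a -> ordC n k b -> ordC n k (a %% b)%N.
Proof.
rewrite /ordC {1}(divn_eq a b) PoszD PoszM mulrDl => ha hb.
have -> : (a %% b)%N%:Z * k = ((a %/ b)%N%:Z * b%:Z * k + (a %% b)%N%:Z * k)
   - (a %/ b)%N%:Z * (b%:Z * k) by rewrite mulrA [X in X - _]addrC addrK.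
by rewrite rpredB // dvdz_mull.
Qed.

Lemma ordC_mul n k a q : ordC n k a -> ordC n k (a * q)%N.
Proof. by rewrite /ordC PoszM => h; rewrite mulrAC mulrC dvdz_mull. Qed.

Lemma ordX_mod (X : zmodType) (z : X) a b : ordX z a -> ordX z b -> ordX z (a %% b)%N.
Proof.
rewrite /ordX {1}(divn_eq a b) mulrnDr (mulnC (a %/ b)%N) mulrnA => ha hb.
by move: ha; rewrite hb mul0rn add0r.
Qed.

Lemma ordX_mul (X : zmodType) (z : X) a q : ordX z a -> ordX z (a * q)%N.
Proof. by rewrite /ordX => h; rewrite mulrnA h mul0rn. Qed.

Section Basic.
Variables (X : zmodType) (g gi : X -> X) (gam : X -> X -> X) (n : nat).
Hypothesis hcp : construction_pair g gi gam.

Lemma gK : cancel g gi. Proof. by case: hcp => [[]]. Qed.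
Lemma giK : cancel gi g. Proof. by case: hcp => [[]]. Qed.
Lemma gamC x y : gam x y = gam y x. Proof. by case: hcp => [[]]. Qed.
Lemma gamxx x : gam x x = 0. Proof. by case: hcp => [[]]. Qed.
Lemma gamDl x y z : gam (x + y) z = gam x z + gam y z. Proof. by case: hcp => [[]]. Qed.
Lemma gamDr x y z : gam x (y + z) = gam x y + gam x z. Proof. by case: hcp => [_ []]. Qed.
Lemma C1 x y : gi (g x + g y) = x + y + gam x y + gi (gam x y) + gi (gi (gam x y)).
Proof. by case: hcp => [_ []]. Qed.
Lemma C2 x y z : gam (gam x y) z = 0. Proof. by case: hcp => [_ []]. Qed.
Lemma C3 x y : gi (gam x y) = gam (g x) y. Proof. by case: hcp => [_ []]. Qed.

Lemma gam0l y : gam 0 y = 0.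
Proof. by apply: (addrI (gam 0 y)); rewrite addr0 -gamDl addr0. Qed.
Lemma gam0r y : gam y 0 = 0. Proof. by rewrite gamC gam0l. Qed.
Lemma gamNl x y : gam (- x) y = - gam x y.
Proof. by apply/eqP; rewrite -addr_eq0 -gamDl addNr gam0l. Qed.
Lemma gamMnl x y m : gam (x *+ m) y = gam x y *+ m.
Proof. by elim: m => [|m IH]; rewrite ?gam0l // !mulrS gamDl IH. Qed.
Lemma gamMzl x y i : gam (x *~ i) y = gam x y *~ i.
Proof. by case: i => m; rewrite ?NegzE ?mulrNz ?gamNl gamMnl. Qed.
Lemma gamMzr x y i : gam y (x *~ i) = gam y x *~ i.
Proof. by rewrite gamC gamMzl gamC. Qed.
Lemma gamNr x y : gam y (- x) = - gam y x.
Proof. by rewrite gamC gamNl gamC. Qed.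
Lemma gamBr c x y : gam c (x - y) = gam c x - gam c y.
Proof. by rewrite gamDr gamNr. Qed.
Lemma gamsuml (I : Type) (r : seq I) (F : I -> X) y :
  gam (\sum_(i <- r) F i) y = \sum_(i <- r) gam (F i) y.
Proof.
elim: r => [|a r IH]; first by rewrite !big_nil gam0l.
by rewrite !big_cons gamDl IH.
Qed.

Lemma gi0 : gi 0 = 0. Proof. by have := C3 0 0; rewrite !gam0r. Qed.
Lemma g0 : g 0 = 0. Proof. by rewrite -{1}gi0 giK. Qed.

Lemma g_gam x y : g (gam x y) = gam (gi x) y.
Proof. by rewrite -{1}(giK x) -C3 giK. Qed.

Lemma gz_neg (m : nat) : gz g gi (- (m%:Z)) = iter m gi.
Proof. case: m => [|m]; first by rewrite oppr0. by rewrite -NegzE. Qed.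
Lemma gz_pos (m : nat) : gz g gi (m%:Z) = iter m g.
Proof. by []. Qed.

Lemma gz_gam j x y : gz g gi j (gam x y) = gam (gz g gi (- j) x) y.
Proof.
case: j => m.
- rewrite gz_neg /=; elim: m => [|m IH] //=; by rewrite IH g_gam.
- rewrite NegzE opprK gz_pos /=; elim: m => [|m IH] /=; first by rewrite C3.
  by rewrite IH C3.
Qed.

Lemma gz0 j : gz g gi j 0 = 0.
Proof.
case: j => m /=; elim: m => [|m IH] //=; rewrite ?IH ?g0 ?gi0 //.
Qed.

Lemma gz_fix x j : g x = x -> gz g gi j x = x.
Proof.
move=> hx; have hix : gi x = x by rewrite -{1}hx gK.
case: j => m /=; elim: m => [|m IH] //=; rewrite ?IH //.
Qed.

Lemma gD_orth x y : gam x y = 0 -> g (x + y) = g x + g y.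
Proof.
move=> h; have := C1 x y; rewrite h gi0 gi0 !addr0 => e.
by rewrite -e giK.
Qed.

Lemma g_fixMz z i : g z = z -> g (z *~ i) = z *~ i.
Proof.
move=> hz.
have hp : forall m : nat, g (z *+ m) = z *+ m.
  elim=> [|m IH]; first by rewrite g0.
  by rewrite mulrS gD_orth ?IH ?hz // gamC gamMnl gamxx mul0rn.
case: i => m; rewrite ?NegzE ?mulrNz ?hp //.
have := gD_orth (x := z *+ m.+1) (y := - (z *+ m.+1)).
rewrite subrr g0 gamNr gamMnl gamC gamMnl gamxx !mul0rn oppr0 => /(_ erefl) /esym.
by rewrite hp => e; apply/eqP; rewrite -addr_eq0 addrC e.
Qed.

Lemma Isum_zero a c (f : int -> X) : (forall k, f k = 0) -> Isum a c f = 0.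
Proof. by move=> h; rewrite /Isum big1. Qed.

Lemma Isum_gam a c x y :
  Isum a c (fun k => gz g gi (- k) (gam x y)) = gam (Isum a c (fun k => gz g gi k x)) y.
Proof. by rewrite /Isum gamsuml; apply: eq_bigr => i _; rewrite gz_gam opprK. Qed.

Local Notation m := (mulQ g gi gam n).
Local Notation Q := (inQ n).

Lemma inQ_mul a b : Q (m a b).
Proof. by rewrite /inQ /= modz_mod. Qed.

Lemma mul_1r a : Q a -> m a (0,0) = a.
Proof.
case: a => a1 a2; rewrite /inQ /mulQ /= => h.
rewrite addr0 oppr0 -h Isum_zero; last by move=> k; rewrite gam0r gz0.
by rewrite !addr0.
Qed.

Lemma mul_1l a : Q a -> m (0,0) a = a.
Proof.
case: a => a1 a2; rewrite /inQ /mulQ /= => h.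
rewrite add0r -h Isum_zero; last by move=> k; rewrite gam0l gz0.
by rewrite gz0 add0r addr0.
Qed.

Lemma modcancel (x a b : int) : a = (a %% n)%Z -> b = (b %% n)%Z ->
  ((x + a) %% n)%Z = ((x + b) %% n)%Z -> a = b.
Proof.
move=> ha hb e; rewrite ha hb.
have : modz (modz (x + a) n - x) n = modz (modz (x + b) n - x) n by rewrite e.
by rewrite !modzDml !(addrC x) !addrK.
Qed.

Lemma inQ0 (y : X) : Q (0, y).
Proof. by rewrite /inQ /= mod0z. Qed.

Definition powQ (k : int) (z : X) (i : int) : int * X := (((k * i) %% n)%Z, z *~ i).

Lemma powQ_inQ k z i : Q (powQ k z i).
Proof. by rewrite /inQ /= modz_mod. Qed.

Lemma powQ0 k z : powQ k z 0 = (0,0).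
Proof. by rewrite /powQ mulr0 mod0z mulr0z. Qed.

Lemma powQ1 k z : powQ k z 1 = ((k %% n)%Z, z).
Proof. by rewrite /powQ mulr1 mulr1z. Qed.

Lemma powQ_mul k z i j : g z = z -> m (powQ k z i) (powQ k z j) = powQ k z (i + j).
Proof.
move=> hz; rewrite /mulQ /powQ /=; congr (_, _).
  by rewrite modzDml modzDmr mulrDr.
rewrite Isum_zero; last first.
  by move=> q; rewrite gamMzl gamMzr gamxx mul0rz mul0rz gz0.
by rewrite addr0 gz_fix ?g_fixMz // mulrzDr.
Qed.

Lemma fiber_inj S : subloop g gi gam n S -> (forall p, S p -> p.1 = 0 -> p = (0,0)) ->
  forall p q, S p -> S q -> p.1 = q.1 -> p = q.
Proof.
case=> SQ _ _ Sdl _ S0 [p1 p2] [q1 q2] Sp Sq /= e.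
set c := Isum (q1 + 0) (- 0) (fun k => gz g gi k q2).
set d := p2 - q2.
have hw : m (q1, q2) (0, d - gam c d) = (p1, p2).
  have hgc : gam c (gam c d) = 0 by rewrite gamC C2.
  rewrite /mulQ /= Isum_gam -/c [gam c (_ - gam c d)]gamBr hgc subr0.
  have hq := SQ _ Sq; rewrite /inQ /= in hq.
  rewrite subr0 -hq e; congr (_, _).
  by rewrite addrA subrK /d addrC subrK.
have := S0 _ (Sdl _ _ _ Sq Sp (inQ0 _) hw) erefl; case=> hd.
by move: hw; rewrite hd mul_1r; [move=> ->|exact: SQ].
Qed.


Lemma central_fix a : in_center g gi gam n a -> a.1 = 0 \/ g a.2 = a.2.
Proof.
case: a => a1 a2 [[Qa _] hc]; rewrite /inQ /= in Qa *.
have [n1|n1] : n = 1%N \/ n <> 1%N by lia.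
  by left; rewrite Qa n1 modz1.
right.
have Q10 : Q (1, 0 : X).
  rewrite /inQ /=; have [->|hn] : n = 0%N \/ (1 < n)%N by lia.
    by rewrite modz0.
  by rewrite modz_small //; apply/andP; split => //; rewrite ltz_nat.
have := hc _ Q10; rewrite /mulQ /= => -[_].
rewrite !Isum_zero; try by move=> k; rewrite ?gam0r ?gam0l gz0.
rewrite gz0 !addr0 add0r /= => h.
by rewrite -{1}h giK.
Qed.

Lemma normal_center S : normal_subloop g gi gam n S ->
  (forall p q, S p -> S q -> p.1 = q.1 -> p = q) ->
  forall s, S s -> in_center g gi gam n s.
Proof.
move=> [[SQ _ _ _ _] hN] inj s Ss; have Qs := SQ _ Ss.
have comm : forall x, Q x -> m s x = m x s.
  move=> x Qx; have [h1 _ _] := hN x x Qx Qx.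
  have [s' [Ss' e]] := (h1 (m x s)).1 (ex_intro _ s (conj Ss erefl)).
  have ss : s' = s.
    apply: inj => //; apply: (modcancel (x := x.1)) (SQ _ Ss') Qs _.
    have := congr1 fst e; rewrite /= (addrC s'.1) => ->; done.
  by rewrite e ss.
have ass2 : forall x y, Q x -> Q y -> m (m x s) y = m x (m s y).
  move=> x y Qx Qy; have [_ h2 _] := hN x y Qx Qy.
  have [s' [Ss' e]] := (h2 (m (m x s) y)).1 (ex_intro _ s (conj Ss erefl)).
  have ss : s' = s.
    apply: inj => //; apply: (modcancel (x := x.1 + y.1)) (SQ _ Ss') Qs _.
    have := congr1 fst e; rewrite /= modzDml modzDmr.
    rewrite (addrAC x.1 s.1) (addrA x.1 s'.1) (addrAC x.1 s'.1) => ->; done.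
  by rewrite e ss.
have ass3 : forall x y, Q x -> Q y -> m x (m y s) = m (m x y) s.
  move=> x y Qx Qy; have [_ _ h3] := hN x y Qx Qy.
  have [s' [Ss' e]] := (h3 (m x (m y s))).1 (ex_intro _ s (conj Ss erefl)).
  have ss : s' = s.
    apply: inj => //; apply: (modcancel (x := x.1 + y.1)) (SQ _ Ss') Qs _.
    have := congr1 fst e; rewrite /= modzDml modzDmr addrA => ->; done.
  by rewrite e ss.
split; last exact: comm.
split=> // x y Qx Qy; split; [|exact: ass2|by rewrite ass3].
rewrite (comm x) // ass2 // (comm y) // ass3 // (comm (m x y)) //; exact: inQ_mul.
Qed.

Local Hint Resolve inQ_mul powQ_inQ : core.
Local Notation Cen := (in_center g gi gam n).

Lemma cenQ a : Cen a -> Q a. Proof. by case=> [[]]. Qed.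
Lemma cen1 a : Cen a -> forall x y, Q x -> Q y -> m (m a x) y = m a (m x y).
Proof. by case=> [[_ h] _] x y Qx Qy; case: (h x y Qx Qy). Qed.
Lemma cen2 a : Cen a -> forall x y, Q x -> Q y -> m (m x a) y = m x (m a y).
Proof. by case=> [[_ h] _] x y Qx Qy; case: (h x y Qx Qy). Qed.
Lemma cen3 a : Cen a -> forall x y, Q x -> Q y -> m (m x y) a = m x (m y a).
Proof. by case=> [[_ h] _] x y Qx Qy; case: (h x y Qx Qy). Qed.
Lemma cenC a : Cen a -> forall x, Q x -> m a x = m x a.
Proof. by case=> _ h. Qed.

Lemma cen_of u : Q u -> (forall x, Q x -> m u x = m x u) ->
  (forall x y, Q x -> Q y -> m (m u x) y = m u (m x y)) ->
  (forall x y, Q x -> Q y -> m (m x y) u = m x (m y u)) -> Cen u.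
Proof.
move=> Qu hC h1 h3; split=> //; split=> // x y Qx Qy; split; [exact: h1| |exact: h3].
rewrite -hC // h1 // (hC y) // -h3 // hC //; exact: inQ_mul.
Qed.

Lemma cen_Lcancel a a' : Cen a -> Q a' -> m a' a = (0,0) ->
  forall u v, Q u -> Q v -> m a u = m a v -> u = v.
Proof.
move=> Ca Qa' e u v Qu Qv h.
by rewrite -(mul_1l Qu) -(mul_1l Qv) -e !(cen2 Ca) // h.
Qed.

Lemma cen_Rcancel a a' : Cen a -> Q a' -> m a a' = (0,0) ->
  forall u v, Q u -> Q v -> m u a = m v a -> u = v.
Proof.
move=> Ca Qa' e u v Qu Qv h.
by rewrite -(mul_1r Qu) -(mul_1r Qv) -e -!(cen2 Ca) // h.
Qed.

Lemma cen_up s t : Cen s -> Cen t -> Cen (m s t).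
Proof.
move=> Cs Ct; have Qs := cenQ Cs; have Qt := cenQ Ct.
apply: cen_of; first exact: inQ_mul.
- move=> x Qx.
  rewrite (cen1 Cs) // (cenC Ct) // -(cen1 Cs) // (cenC Cs (x:=x)) // (cen2 Cs) //.
- move=> x y Qx Qy.
  rewrite (cen1 Cs) // (cen1 Cs (x:=m t x)) // (cen1 Ct) //.
  by rewrite (cen1 Cs (x:=t)).
- move=> x y Qx Qy.
  rewrite -(cenC Ct (x:=s)) // -(cen3 Cs) // (cen3 Ct) //.
  by rewrite (cen3 Cs) // (cen3 Cs).
Qed.

Lemma cen_down s s' t : Cen s -> Q s' -> m s' s = (0,0) -> m s s' = (0,0) ->
  Q t -> Cen (m s t) -> m t s = m s t -> Cen t.
Proof.
move=> Cs Qs' e1 e2 Qt Cu et; have Qs := cenQ Cs.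
have LC := cen_Lcancel Cs Qs' e1; have RC := cen_Rcancel Cs Qs' e2.
apply: cen_of => //.
- move=> x Qx; apply: LC; try exact: inQ_mul.
  rewrite -(cen1 Cs) // (cenC Cu) // -et -(cen3 Cs) // (cenC Cs) //; exact: inQ_mul.
- move=> x y Qx Qy; apply: LC; try exact: inQ_mul.
  rewrite -(cen1 Cs) // -(cen1 Cs) // (cen1 Cu) //.
  by rewrite (cen1 Cs).
- move=> x y Qx Qy; apply: RC; try exact: inQ_mul.
  rewrite (cen3 Cs) // et (cen3 Cu) // -et.
  by rewrite -(cen3 Cs) // -(cen3 Cs).
Qed.

Lemma cen0 : Cen (0,0).
Proof.
apply: cen_of; first exact: inQ0.
- by move=> x Qx; rewrite mul_1l // mul_1r.
- by move=> x y Qx Qy; rewrite !mul_1l.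
- by move=> x y Qx Qy; rewrite !mul_1r.
Qed.

Lemma pow_cen k z : g z = z -> Cen (powQ k z 1) -> forall i, Cen (powQ k z i).
Proof.
move=> hz C1'.
have e1 : m (powQ k z (-1)) (powQ k z 1) = (0,0) by rewrite powQ_mul // addNr powQ0.
have e2 : m (powQ k z 1) (powQ k z (-1)) = (0,0) by rewrite powQ_mul // addrN powQ0.
have H : forall q : nat, Cen (powQ k z q) /\ Cen (powQ k z (- q%:Z)).
  elim=> [|q [IH1 IH2]].
    by rewrite oppr0 powQ0; split; apply: cen0.
  split.
    by rewrite -addn1 PoszD addrC -powQ_mul //; apply: cen_up.
  apply: (cen_down C1' (powQ_inQ _ _ _) e1 e2 (powQ_inQ _ _ _)).
    by rewrite powQ_mul // -addn1 PoszD opprD addrA addrAC subrr add0r.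
  by rewrite !powQ_mul // addrC.
by case=> q; [exact: (H q).1 | rewrite NegzE; exact: (H q.+1).2].
Qed.

Lemma pow_in_subloop T k z : subloop g gi gam n T -> g z = z -> T (powQ k z 1) ->
  forall i, T (powQ k z i).
Proof.
case=> _ _ Tm Tdl _ hz T1.
have T0 : T (powQ k z 0).
  apply: (Tdl _ _ _ T1 T1 (powQ_inQ _ _ _)); by rewrite powQ_mul // addr0.
have H : forall q : nat, T (powQ k z q) /\ T (powQ k z (- q%:Z)).
  elim=> [|q [IH1 IH2]]; first by rewrite oppr0.
  split.
    by rewrite -addn1 PoszD addrC -powQ_mul //; apply: Tm.
  apply: (Tdl _ _ _ T1 IH2 (powQ_inQ _ _ _)).
  by rewrite powQ_mul // -addn1 PoszD opprD addrA addrAC subrr add0r.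
by case=> q; [exact: (H q).1 | rewrite NegzE; exact: (H q.+1).2].
Qed.

Section Fin.
Variable S : int * X -> Prop.
Hypothesis NS : normal_subloop g gi gam n S.
Hypothesis TI1 : forall p, (S p /\ p.1 = 0) <-> p = (0, 0).
Hypothesis TI2 : forall p, (S p /\ p.2 = 0) <-> p = (0, 0).

Let SL : subloop g gi gam n S := NS.1.
Let SQ : forall p, S p -> Q p. Proof. by case: SL. Qed.
Let S0 : forall p, S p -> p.1 = 0 -> p = (0,0).
Proof. by move=> p Sp e; apply/TI1. Qed.
Let S00 : S (0,0). Proof. by have [] := (TI1 (0,0)).2 erefl. Qed.
Let inj := fiber_inj SL S0.
Let CenS : forall s, S s -> Cen s := normal_center NS inj.
Let fixS : forall s, S s -> g s.2 = s.2.
Proof.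
move=> s Ss; case: (central_fix (CenS Ss)) => // h.
by rewrite (S0 Ss h) /= g0.
Qed.

Lemma finish k z : S (k, z) -> k = (k %% n)%Z ->
  (forall p, S p -> exists i, p = powQ k z i) ->
  (exists (k : int) (z : X),
     (forall p, S p <-> gen_subloop g gi gam n ((k %% n%:Z)%Z, z) p) /\
     (forall p, S p <-> exists i : int, p = (((k * i) %% n%:Z)%Z, z *~ i)) /\
     (exists o : nat, is_order (ordC n k) o /\ is_order (ordX z) o) /\
     in_center g gi gam n ((k %% n%:Z)%Z, z)).
Proof.
move=> Sk kr hall; have hz : g z = z := fixS Sk.
have s1 : powQ k z 1 = (k, z) by rewrite powQ1 -kr.
have Spow : forall i, S (powQ k z i).
  by apply: pow_in_subloop => //; rewrite s1.
exists k, z; split; last split; last split.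
- move=> p; split.
    move=> /hall [i ->] T ST Tk; apply: pow_in_subloop => //; by rewrite powQ1.
  by move=> /(_ S SL); rewrite -kr; apply.
- by move=> p; split; [exact: hall | case=> i ->; exact: Spow].
- apply: common_order => a a0; rewrite /ordC /ordX; split.
    move=> /dvdz_mod0P h.
    have e : powQ k z a = (0,0) by apply: (S0 (Spow a)); rewrite /powQ /= mulrC h.
    by rewrite pmulrn; have := congr1 snd e.
  move=> h; have h2 : (powQ k z a).2 = 0 by rewrite /= -pmulrn.
  have := (TI2 (powQ k z a)).1 (conj (Spow a) h2); rewrite /powQ => -[e _].
  by apply/dvdz_mod0P; rewrite mulrC.
- by rewrite -kr; apply: CenS.
Qed.


Lemma forward :
  (exists (k : int) (z : X),
     (forall p, S p <-> gen_subloop g gi gam n ((k %% n%:Z)%Z, z) p) /\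
     (forall p, S p <-> exists i : int, p = (((k * i) %% n%:Z)%Z, z *~ i)) /\
     (exists o : nat, is_order (ordC n k) o /\ is_order (ordX z) o) /\
     in_center g gi gam n ((k %% n%:Z)%Z, z)).
Proof.
have [_ _ Sm _ _] := SL.
have SpowS : forall p, S p -> forall i, S (powQ p.1 p.2 i).
  move=> [p1 p2] Sp; apply: pow_in_subloop => //; first exact: (fixS Sp).
  by rewrite powQ1 /= -(SQ Sp).
case: (classic (exists p, S p /\ p.1 != 0)) => [[[p1 p2] [Sp p10]]|hn]; last first.
  apply: (finish (k:=0) (z:=0)) => //; first by rewrite mod0z.
  move=> p Sp; exists 0; rewrite powQ0; apply: S0 => //.
  by case: (eqVneq p.1 0) => // h; case: hn; exists p.
have [q [Sq q0]] : exists q, S q /\ 0 < q.1.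
  have [h|h] : 0 < p1 \/ p1 < 0 by move: p10 => /= p10; lia.
    by exists (p1, p2).
  have Qp := SQ Sp; rewrite /inQ /= in Qp.
  have n0 : n = 0%N.
    case: (posnP n) => // np; have := modz_ge0 p1 (d := n%:Z).
    by rewrite -Qp; lia.
  exists (powQ p1 p2 (-1)); split; first exact: (SpowS _ Sp).
  by rewrite /= n0 modz0; lia.
pose P m := exists p, S p /\ p.1 = m%:Z.
have [o [o0 [s [Ss so]] hm]] : exists o, [/\ (0 < o)%N, P o &
    forall m, (0 < m)%N -> (m < o)%N -> ~ P m].
  apply: (min_ex (a := `|q.1|%N)); first by lia.
  by exists q; split => //; lia.
have hz := fixS Ss.
have kr : o%:Z = (o%:Z %% n)%Z by rewrite -so; exact: (SQ Ss).
have Sk : S (o%:Z, s.2) by rewrite -so -surjective_pairing.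
apply: (finish Sk kr).
move=> [p1' p2'] Sp'; have Qp' := SQ Sp'; rewrite /inQ /= in Qp'.
have Spw := SpowS _ Sk; rewrite /= in Spw.
set qq := (p1' %/ o%:Z)%Z; set r := (p1' %% o%:Z)%Z.
have hdiv := divz_eq p1' o%:Z; rewrite -/qq -/r in hdiv.
have r0 : 0 <= r by apply: modz_ge0; lia.
have ro : r < o%:Z by apply: ltz_pmod; lia.
have Sw := Sm _ _ Sp' (Spw (- qq)).
have w1 : (mulQ g gi gam n (p1', p2') (powQ o%:Z s.2 (- qq))).1 = r.
  rewrite /= modzDmr.
  have -> : p1' + o%:Z * - qq = r by rewrite {1}hdiv; nia.
  have [n0|np] := posnP n; first by rewrite n0 modz0.
  apply: modz_small; apply/andP; split => //.
  have := ltz_pmod o%:Z (d := n%:Z); rewrite -kr; lia.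
have rz : r = 0.
  case: (eqVneq r 0) => // rn; exfalso.
  apply: (hm `|r|%N); [lia | lia |].
  by exists (mulQ g gi gam n (p1', p2') (powQ o%:Z s.2 (- qq))); split => //; rewrite w1; lia.
exists qq; apply: inj => //; rewrite /= Qp'.
by rewrite hdiv rz addr0 mulrC.
Qed.
End Fin.

Lemma backward S k z :
  (forall p, S p <-> exists i : int, p = (((k * i) %% n%:Z)%Z, z *~ i)) ->
  (exists o : nat, is_order (ordC n k) o /\ is_order (ordX z) o) ->
  in_center g gi gam n ((k %% n%:Z)%Z, z) ->
  (normal_subloop g gi gam n S /\
   (forall p, (S p /\ p.1 = 0) <-> p = (0, 0)) /\
   (forall p, (S p /\ p.2 = 0) <-> p = (0, 0))).
Proof.
move=> hS [o [oC oX]] Cs.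
have eqPQ : forall a, (0 < a)%N -> ordC n k a <-> ordX z a.
  move=> a a0; rewrite (order_dvd oC) //; last first.
  - exact: ordC_mul.
  - exact: ordC_mod.
  rewrite (order_dvd oX) //; [exact: ordX_mod | exact: ordX_mul].
have ordiff : forall i, (n%:Z %| k * i)%Z <-> z *~ i = 0.
  have hp : forall a : nat, (n%:Z %| k * a%:Z)%Z <-> z *~ a%:Z = 0.
    case=> [|a]; first by rewrite mulr0 mulr0z dvdz0.
    by rewrite -pmulrn mulrC; apply: eqPQ.
  case=> a; first exact: hp.
  rewrite NegzE mulrN mulrNz rpredN; split => [/hp -> |]; first by rewrite oppr0.
  by move/eqP; rewrite oppr_eq0 => /eqP /hp.
have hz : g z = z.
  case: (central_fix Cs) => //= h.
  have : ordX z 1 by rewrite -eqPQ //; rewrite /ordC mul1r; apply/dvdz_mod0P.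
  by rewrite /ordX mulr1n => ->; rewrite g0.
have C1' : Cen (powQ k z 1) by rewrite powQ1.
have Cpow := pow_cen hz C1'.
have Sp : forall p, S p <-> exists i, p = powQ k z i by [].
have CS : forall s, S s -> Cen s by move=> s /Sp [i ->].
split; last split.
- split.
  + split.
    * by move=> p /Sp [i ->]; exact: powQ_inQ.
    * by exists (powQ k z 0); apply/Sp; exists 0.
    * by move=> a b /Sp [i ->] /Sp [j ->]; apply/Sp; exists (i + j); rewrite powQ_mul.
    * move=> a b w /Sp [i ->] /Sp [j ->] Qw e; apply/Sp; exists (j - i).
      apply: (cen_Lcancel (Cpow i) (powQ_inQ k z (- i))) => //.
        by rewrite powQ_mul // addNr powQ0.
      by rewrite e powQ_mul // addrC subrK.
    * move=> a b w /Sp [i ->] /Sp [j ->] Qw e; apply/Sp; exists (j - i).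
      apply: (cen_Rcancel (Cpow i) (powQ_inQ k z (- i))) => //.
        by rewrite powQ_mul // addrN powQ0.
      by rewrite e powQ_mul // subrK.
  + move=> x y Qx Qy; split => w; split; case=> s [Ss ->]; exists s; split => //.
    * by rewrite (cenC (CS _ Ss)).
    * by rewrite (cenC (CS _ Ss)).
    * by rewrite (cen2 (CS _ Ss)).
    * by rewrite (cen2 (CS _ Ss)).
    * by rewrite (cen3 (CS _ Ss)).
    * by rewrite (cen3 (CS _ Ss)).
- move=> p; split.
    case=> /Sp [i ->] /= h0; have e := (ordiff i).1 (introT dvdz_mod0P h0).
    by rewrite /powQ h0 e.
  by move=> ->; split => //; apply/Sp; exists 0; rewrite powQ0.
- move=> p; split.
    case=> /Sp [i ->] /= h; have := (ordiff i).2 h.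
    by rewrite /powQ h => /dvdz_mod0P ->.
  by move=> ->; split => //; apply/Sp; exists 0; rewrite powQ0.
Qed.
End Basic.

Theorem mainTheorem17 (X : zmodType) (g gi : X -> X) (gam : X -> X -> X)
  (n : nat) (S : int * X -> Prop) :
  construction_pair g gi gam -> cyclic_ok g gam n ->
  (forall p, S p -> inQ n p) -> (exists p, S p) ->
  (normal_subloop g gi gam n S /\
   (forall p, (S p /\ p.1 = 0) <-> p = (0, 0)) /\
   (forall p, (S p /\ p.2 = 0) <-> p = (0, 0)))
  <->
  (exists (k : int) (z : X),
     (forall p, S p <-> gen_subloop g gi gam n ((k %% n%:Z)%Z, z) p) /\
     (forall p, S p <-> exists i : int, p = (((k * i) %% n%:Z)%Z, z *~ i)) /\
     (exists o : nat, is_order (ordC n k) o /\ is_order (ordX z) o) /\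
     in_center g gi gam n ((k %% n%:Z)%Z, z)).
Proof.
move=> hcp _ _ _; split.
  by case=> NS [T1 T2]; exact: (forward hcp NS T1 T2).
by case=> k [z [_ [h2 [ho hc]]]]; exact: (backward hcp h2 ho hc).
Qed.
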